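(* Let $G$ be an ample Hausdorff groupoid, let $R$ be a commutative unital ring with the discrete topology, let $T \le R^\times$, let $(\Sigma,i,q)$ be a topologically trivial discrete twist by $T$ over $G$, let $P\colon G \to \Sigma$ be a continuous global section, and let $\sigma\colon G^{(2)} \to T$ be the continuous $2$-cocycle induced by $P$, i.e. the unique map with $P(\alpha)P(\beta)P(\alpha\beta)^{-1} = i(r(\alpha),\sigma(\alpha,\beta))$ for all $(\alpha,\beta)\in G^{(2)}$. Then $\Psi(f) := f \circ P$ defines an $R$-algebra isomorphism $\Psi\colon A_R(G;\Sigma) \to A_R(G,\sigma^{-1})$, where $\sigma^{-1}(\alpha,\beta) := \sigma(\alpha,\beta)^{-1}$. If $R$ has a $T$-inverse involution, then $\Psi$ is a $*$-isomorphism.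
   Context: Groupoids are locally compact Hausdorff topological groupoids; $G$ is ample if it has a basis of compact open bisections. A discrete twist by $T$ over $G$ is a sequence $G^{(0)} \times T \xrightarrow{i} \Sigma \xrightarrow{q} G$, where $T$ carries the discrete topology, $G^{(0)} \times T$ is the trivial group bundle, $\Sigma$ is a Hausdorff groupoid with $\Sigma^{(0)} = i(G^{(0)} \times \{1\})$, $i, q$ continuous groupoid homomorphisms restricting to homeomorphisms of unit spaces, such that: (1) $i(\{x\} \times T) = q^{-1}(x)$, $i$ injective, $q$ a quotient map; (2) for each $\alpha \in G$ there are an open bisection $B_\alpha \ni \alpha$ and continuous $P_\alpha\colon B_\alpha \to \Sigma$ with $q\circ P_\alpha = \mathrm{id}$ such that $(\beta,z) \mapsto i(r(\beta),z)P_\alpha(\beta)$ is a homeomorphism $B_\alpha \times T \to q^{-1}(B_\alpha)$; (3) $i(r(\varepsilon),z)\varepsilon = \varepsilon\, i(s(\varepsilon),z)$. $T$ acts by $z\cdot\varepsilon := i(r(\varepsilon),z)\varepsilon$. A continuous global section is a continuous $P\colon G\to\Sigma$ with $q\circ P = \mathrm{id}_G$ and $P(G^{(0)})\subseteq\Sigma^{(0)}$; the twist is topologically trivial if one exists. $A_R(G;\Sigma)$ is the set of continuous $T$-equivariant ($f(z\cdot\varepsilon) = zf(\varepsilon)$) $f\colon\Sigma\to R$ with $\overline{q(\{f\neq0\})}$ compact, with pointwise module operations, multiplication $(f*_\Sigma g)(\varepsilon) = \sum_{\gamma\in G^{s(q(\varepsilon))}} f(\varepsilon P(\gamma))g(P(\gamma)^{-1})$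 and (when $R$ has a $T$-inverse involution) involution $f^*(\varepsilon) = \overline{f(\varepsilon^{-1})}$. For a continuous $2$-cocycle $\omega\colon G^{(2)}\to T$ (continuous, with $\omega(\alpha,\beta)\omega(\alpha\beta,\gamma) = \omega(\alpha,\beta\gamma)\omega(\beta,\gamma)$ and $\omega(r(\gamma),\gamma)=1=\omega(\gamma,s(\gamma))$), $A_R(G,\omega)$ is the $R$-module of locally constant compactly supported $f\colon G\to R$ with multiplication $(f*_\omega g)(\gamma) = \sum_{\alpha\beta=\gamma}\omega(\alpha,\beta)f(\alpha)g(\beta)$ and involution $f^*(\gamma) = \omega(\gamma,\gamma^{-1})^{-1}\overline{f(\gamma^{-1})}$. A $T$-inverse involution on $R$ is a ring involution $r\mapsto\overline r$ with $\overline z = z^{-1}$ for $z\in T$. *)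

(* Defs.v *)
From HB Require Import structures.
From mathcomp Require Import all_boot all_order all_algebra.
From mathcomp Require Import all_classical all_reals all_analysis.
Set Implicit Arguments. Unset Strict Implicit. Unset Printing Implicit Defensive.
Import Order.TTheory GRing.Theory Num.Theory.
Local Open Scope classical_set_scope.
Local Open Scope ring_scope.

(* ---------- Groupoids (algebraic part) ----------
   A groupoid on a carrier G is given by total functions r, s, inv, mul;
   mul a b is only meaningful when (a,b) is composable, i.e. s a = r b. *)
Record groupoid_ops (G : Type) := GroupoidOps {
  g_r : G -> G; g_s : G -> G; g_inv : G -> G; g_mul : G -> G -> G }.

Definition composable {G} (o : groupoid_ops G) (a b : G) := g_s o a = g_r o b.
Definition unit_space {G} (o : groupoid_ops G) : set G := [set x | g_r o x = x].
Definition range_fiber {G} (o : groupoid_ops G) (x : G) : set G := [set g | g_r o g = x].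

Definition is_groupoid {G} (o : groupoid_ops G) : Prop :=
  [/\ (forall a b, composable o a b ->
         g_r o (g_mul o a b) = g_r o a /\ g_s o (g_mul o a b) = g_s o b),
      (forall a b c, composable o a b -> composable o b c ->
         g_mul o (g_mul o a b) c = g_mul o a (g_mul o b c)),
      (forall a, g_mul o (g_r o a) a = a /\ g_mul o a (g_s o a) = a),
      (forall a, g_r o (g_inv o a) = g_s o a /\ g_s o (g_inv o a) = g_r o a) &
      (forall a, g_mul o a (g_inv o a) = g_r o a /\ g_mul o (g_inv o a) a = g_s o a)].

Definition locally_compact_hausdorff (X : topologicalType) : Prop :=
  hausdorff_space X /\ forall x : X, exists K : set X, compact K /\ nbhs x K.

Definition rel_open {X : topologicalType} (S A : set X) : Prop :=
  exists W : set X, open W /\ A = W `&` S.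

Definition homeo_on {X Y : topologicalType} (A : set X) (B : set Y) (f : X -> Y) : Prop :=
  [/\ (forall x, A x -> B (f x)),
      (forall x y, A x -> A y -> f x = f y -> x = y),
      (forall y, B y -> exists2 x, A x & f x = y),
      {within A, continuous f} &
      (forall V, V `<=` A -> rel_open A V -> rel_open B (f @` V))].

Definition is_topological_groupoid {G : topologicalType} (o : groupoid_ops G) : Prop :=
  [/\ is_groupoid o, locally_compact_hausdorff G,
      continuous (g_r o) /\ continuous (g_s o), continuous (g_inv o) &
      {within [set p : G * G | composable o p.1 p.2],
         continuous (fun p : G * G => g_mul o p.1 p.2)}].

Definition open_bisection {G : topologicalType} (o : groupoid_ops G) (B : set G) : Prop :=
  [/\ open B,
      homeo_on B (g_r o @` B) (g_r o), rel_open (unit_space o) (g_r o @` B),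
      homeo_on B (g_s o @` B) (g_s o) & rel_open (unit_space o) (g_s o @` B)].

Definition ample {G : topologicalType} (o : groupoid_ops G) : Prop :=
  forall (U : set G) (x : G), open U -> U x ->
    exists B : set G, [/\ open_bisection o B, compact B, B x & B `<=` U].

(* Locally constant = continuous into a discrete space. *)
Definition locally_constant {X : topologicalType} {Y : Type} (f : X -> Y) : Prop :=
  forall x : X, \forall y \near x, f y = f x.

Definition unit_subgroup (R : comUnitRingType) (T : set R) : Prop :=
  [/\ T 1, (forall z, T z -> z \is a GRing.unit),
      (forall z w, T z -> T w -> T (z * w)) & (forall z, T z -> T z^-1)].

Definition T_inverse_involution (R : comUnitRingType) (T : set R) (bar : R -> R) : Prop :=
  [/\ (forall a b, bar (a + b) = bar a + bar b),
      (forall a b, bar (a * b) = bar a * bar b),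
      bar 1 = 1, (forall a, bar (bar a) = a) &
      (forall z, T z -> bar z = z^-1)].

(* ---------- Discrete twists ----------
   i : G -> R -> Sigma stands for i : G^(0) x T -> Sigma (only its values
   on G^(0) x T matter); q : Sigma -> G.  T carries the discrete topology. *)
Definition discrete_twist (R : comUnitRingType) (T : set R)
    {G S : topologicalType} (oG : groupoid_ops G) (oS : groupoid_ops S)
    (i : G -> R -> S) (q : S -> G) : Prop :=
  [/\ is_topological_groupoid oS /\
      unit_space oS = [set i x 1 | x in unit_space oG],
      [/\ (forall x z w, unit_space oG x -> T z -> T w ->
             g_mul oS (i x z) (i x w) = i x (z * w)),
          (forall x z, unit_space oG x -> T z ->
             g_r oS (i x z) = i x 1 /\ g_s oS (i x z) = i x 1) &
          (forall z, T z -> {within unit_space oG, continuous (fun x => i x z)})],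
      [/\ continuous q,
          (forall a b, composable oS a b -> q (g_mul oS a b) = g_mul oG (q a) (q b)) &
          (forall a, q (g_r oS a) = g_r oG (q a) /\ q (g_s oS a) = g_s oG (q a))],
      homeo_on (unit_space oG) (unit_space oS) (fun x => i x 1) /\
      homeo_on (unit_space oS) (unit_space oG) q &
      [/\
          (forall x, unit_space oG x ->
             q @^-1` [set x] = [set i x z | z in T]),
          (forall x y z w, unit_space oG x -> unit_space oG y -> T z -> T w ->
             i x z = i y w -> x = y /\ z = w),
          (forall g, exists e, q e = g) /\
          (forall V : set G, open V <-> open (q @^-1` V)),
          (* (2) local trivialisations; since T is discrete, the homeomorphism
             B x T -> q^{-1}(B) is written out: bijective, continuous in beta
             for each fixed z, and with continuous inverse e |-> (q e, zeta e),
             i.e. zeta locally constant on q^{-1}(B). *)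
          (forall alpha : G, exists (B : set G) (Pa : G -> S),
             [/\ open_bisection oG B, B alpha,
                 {within B, continuous Pa},
                 (forall b, B b -> q (Pa b) = b) &
                 [/\ (forall b z, B b -> T z ->
                        q (g_mul oS (i (g_r oG b) z) (Pa b)) = b),
                     (forall b c z w, B b -> B c -> T z -> T w ->
                        g_mul oS (i (g_r oG b) z) (Pa b) = g_mul oS (i (g_r oG c) w) (Pa c) ->
                        b = c /\ z = w),
                     (forall z, T z ->
                        {within B, continuous (fun b => g_mul oS (i (g_r oG b) z) (Pa b))}) &
                     exists zeta : S -> R,
                       (forall e, B (q e) ->
                          T (zeta e) /\ e = g_mul oS (i (g_r oG (q e)) (zeta e)) (Pa (q e))) /\
                       (forall e, B (q e) -> \forall e' \near e, zeta e' = zeta e)]]) &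
          (forall e z, T z ->
             g_mul oS (i (q (g_r oS e)) z) e = g_mul oS e (i (q (g_s oS e)) z))]].

(* Action of T on Sigma:  z . e := i(r(e), z) e  (r(e) identified with q(r(e))) *)
Definition T_act {R : comUnitRingType} {G S : Type} (oS : groupoid_ops S)
  (i : G -> R -> S) (q : S -> G) (z : R) (e : S) : S :=
  g_mul oS (i (q (g_r oS e)) z) e.

Definition continuous_global_section {G S : topologicalType}
  (oG : groupoid_ops G) (oS : groupoid_ops S) (q : S -> G) (P : G -> S) : Prop :=
  [/\ continuous P, (forall g, q (P g) = g) &
      (forall x, unit_space oG x -> unit_space oS (P x))].

Definition A_twist {R : comUnitRingType} (T : set R) {G S : topologicalType}
  (oS : groupoid_ops S) (i : G -> R -> S) (q : S -> G) (f : S -> R) : Prop :=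
  [/\ locally_constant f,
      (forall z e, T z -> f (T_act oS i q z e) = z * f e) &
      compact (closure (q @` [set e | f e != 0]))].

Definition conv_twist {R : comUnitRingType} {G S : topologicalType}
  (oG : groupoid_ops G) (oS : groupoid_ops S) (q : S -> G) (P : G -> S)
  (f g : S -> R) : S -> R :=
  fun e => \sum_(gam \in range_fiber oG (g_s oG (q e)))
             f (g_mul oS e (P gam)) * g (g_inv oS (P gam)).

Definition star_twist {R : comUnitRingType} {S : Type} (oS : groupoid_ops S)
  (bar : R -> R) (f : S -> R) : S -> R :=
  fun e => bar (f (g_inv oS e)).

Definition A_cocycle {R : comUnitRingType} {G : topologicalType} (f : G -> R) : Prop :=
  locally_constant f /\ compact (closure [set g | f g != 0]).

Definition conv_cocycle {R : comUnitRingType} {G : topologicalType}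
  (oG : groupoid_ops G) (omega : G -> G -> R) (f g : G -> R) : G -> R :=
  fun gam => \sum_(p \in [set p : G * G | composable oG p.1 p.2 /\ g_mul oG p.1 p.2 = gam])
               omega p.1 p.2 * f p.1 * g p.2.

Definition star_cocycle {R : comUnitRingType} {G : Type} (oG : groupoid_ops G)
  (omega : G -> G -> R) (bar : R -> R) (f : G -> R) : G -> R :=
  fun gam => (omega gam (g_inv oG gam))^-1 * bar (f (g_inv oG gam)).

(* Main.v *)
Require Import Defs.
From mathcomp Require Import all_boot all_order all_algebra.
From mathcomp Require Import all_classical all_reals all_analysis.
From mathcomp Require Import ring.
Import GRing.Theory.
Local Open Scope classical_set_scope.
Local Open Scope ring_scope.

Set Implicit Arguments. Unset Strict Implicit.

Lemma gp_rr (G : Type) (o : groupoid_ops G) (H : is_groupoid o) a :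
  g_r o (g_r o a) = g_r o a.
Proof.
case: H => Hm Ha Hu Hi Hv.
have c : composable o a (g_inv o a) by rewrite /composable (Hi a).1.
by have := (Hm _ _ c).1; rewrite (Hv a).1.
Qed.

Lemma gp_sr (G : Type) (o : groupoid_ops G) (H : is_groupoid o) a :
  g_s o (g_r o a) = g_r o a.
Proof.
case: H => Hm Ha Hu Hi Hv.
have c : composable o a (g_inv o a) by rewrite /composable (Hi a).1.
by have := (Hm _ _ c).2; rewrite (Hv a).1 (Hi a).2.
Qed.

Lemma gp_rs (G : Type) (o : groupoid_ops G) (H : is_groupoid o) a :
  g_r o (g_s o a) = g_s o a.
Proof.
have := H; case=> Hm Ha Hu Hi Hv.
by rewrite -(Hi a).1 gp_rr.
Qed.

Lemma gp_ss (G : Type) (o : groupoid_ops G) (H : is_groupoid o) a :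
  g_s o (g_s o a) = g_s o a.
Proof.
have := H; case=> Hm Ha Hu Hi Hv.
by rewrite -(Hi a).1 gp_sr.
Qed.

Lemma gp_invinv (G : Type) (o : groupoid_ops G) (H : is_groupoid o) b :
  g_inv o (g_inv o b) = b.
Proof.
have := H; case=> Hm Ha Hu Hi Hv.
set c := g_inv o (g_inv o b).
have c1 : composable o c (g_inv o b) by rewrite /composable (Hi (g_inv o b)).2.
have c2 : composable o (g_inv o b) b by rewrite /composable (Hi b).2.
have e1 := (Hv (g_inv o b)).2. rewrite -/c (Hi b).2 in e1.
rewrite -[RHS](Hu b).1 -e1 (Ha _ _ _ c1 c2) (Hv b).2.
have e2 : g_s o b = g_s o c by rewrite /c (Hi (g_inv o b)).2 (Hi b).1.
by rewrite e2 (Hu c).2.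
Qed.

Lemma gp_cancel_l (G : Type) (o : groupoid_ops G) (H : is_groupoid o) a b c :
  composable o a b -> composable o a c -> g_mul o a b = g_mul o a c -> b = c.
Proof.
have := H; case=> Hm Ha Hu Hi Hv => cab cac e.
have ca : composable o (g_inv o a) a by rewrite /composable (Hi a).2.
rewrite -(Hu b).1 -(Hu c).1 -cab -cac -(Hv a).2.
by rewrite (Ha _ _ _ ca cab) (Ha _ _ _ ca cac) e.
Qed.

Lemma gp_cancel_r (G : Type) (o : groupoid_ops G) (H : is_groupoid o) a b c :
  composable o b a -> composable o c a -> g_mul o b a = g_mul o c a -> b = c.
Proof.
have := H; case=> Hm Ha Hu Hi Hv => cba cca e.
have ca : composable o a (g_inv o a) by rewrite /composable (Hi a).1.
rewrite -(Hu b).2 -(Hu c).2 cba cca -(Hv a).1.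
by rewrite -(Ha _ _ _ cba ca) -(Ha _ _ _ cca ca) e.
Qed.

Theorem theorem4p23 (R : comUnitRingType) (T : set R)
  (G S : topologicalType) (oG : groupoid_ops G) (oS : groupoid_ops S)
  (i : G -> R -> S) (q : S -> G) (P : G -> S) (sigma : G -> G -> R) :
  is_topological_groupoid oG -> ample oG ->
  unit_subgroup T ->
  discrete_twist T oG oS i q ->
  continuous_global_section oG oS q P ->
  (forall a b, composable oG a b ->
     T (sigma a b) /\
     g_mul oS (g_mul oS (P a) (P b)) (g_inv oS (P (g_mul oG a b)))
       = i (g_r oG a) (sigma a b)) ->
  let omega := fun a b => (sigma a b)^-1 in
  let Psi := fun f : S -> R => f \o P in
  [/\ (forall f, A_twist T oS i q f -> A_cocycle (Psi f)),
      (forall f1 f2, A_twist T oS i q f1 -> A_twist T oS i q f2 ->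
         Psi f1 = Psi f2 -> f1 = f2) /\
      (forall h, A_cocycle h -> exists2 f, A_twist T oS i q f & Psi f = h),
      (forall (c : R) f g, A_twist T oS i q f -> A_twist T oS i q g ->
         Psi (fun e => f e + g e) = (fun x => Psi f x + Psi g x) /\
         Psi (fun e => c * f e) = (fun x => c * Psi f x)),
      (forall f g, A_twist T oS i q f -> A_twist T oS i q g ->
         Psi (conv_twist oG oS q P f g) = conv_cocycle oG omega (Psi f) (Psi g)) &
      (forall bar : R -> R, T_inverse_involution T bar ->
         forall f, A_twist T oS i q f ->
         Psi (star_twist oS bar f) = star_cocycle oG omega bar (Psi f))].
Proof.
move=> HG Hamp HT Htw HP Hsig omega Psi.
case: HG => HgG _ [crG csG] _ _.
case: Htw => [[HtS HuS] [imul irs icont] [cq qmul qrs] [hi hq] [H1 iinj [qsurj qquot] Htriv H3]].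
case: HtS => HgS _ _ _ _.
case: hq => _ qinjU _ _ _.
case: HP => cP qP Punit.
case: HT => T1 Tu TM TV.
have := HgG => -[mG aG uG iG vG].
have := HgS => -[mS aS uS iS vS].
have uGr : forall g, unit_space oG (g_r oG g).
  move=> g; rewrite /unit_space /=. exact: (gp_rr HgG).
have uGs : forall g, unit_space oG (g_s oG g) by move=> g; rewrite /unit_space /=; exact: (gp_rs HgG).
have uSr : forall g, unit_space oS (g_r oS g) by move=> g; rewrite /unit_space /=; exact: (gp_rr HgS).
have uSs : forall g, unit_space oS (g_s oS g) by move=> g; rewrite /unit_space /=; exact: (gp_rs HgS).
have qi : forall x z, unit_space oG x -> T z -> q (i x z) = x.
  move=> x z ux Tz; change ((q @^-1` [set x]) (i x z)); rewrite H1 //; by exists z.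
have K1 : forall u, unit_space oS u -> u = i (q u) 1.
  move=> u Hu; have : [set i x 1 | x in unit_space oG] u by rewrite -HuS.
  by case=> x ux <-; rewrite qi.
have re : forall e, g_r oS e = i (g_r oG (q e)) 1.
  by move=> e; rewrite -(qrs e).1; apply: K1.
have se : forall e, g_s oS e = i (g_s oG (q e)) 1.
  by move=> e; rewrite -(qrs e).2; apply: K1.
have compS : forall a b, g_s oG (q a) = g_r oG (q b) -> composable oS a b.
  by move=> a b E; rewrite /composable re se E.
have qPu : forall g, unit_space oG g -> P g = i g 1.
  by move=> g ug; rewrite {1}(K1 _ (Punit g ug)) qP.
have lunit : forall e, g_mul oS (i (g_r oG (q e)) 1) e = e.
  by move=> e; rewrite -re (uS e).1.
have Tact : forall w e, T_act oS i q w e = g_mul oS (i (g_r oG (q e)) w) e.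
  by move=> w e; rewrite /T_act (qrs e).1.
have F0 : forall e p, q e = q p -> e = g_mul oS (g_mul oS e (g_inv oS p)) p.
  move=> e p E.
  have c1 : composable oS e (g_inv oS p) by rewrite /composable (iS p).1 !se E.
  have c2 : composable oS (g_inv oS p) p by rewrite /composable (iS p).2.
  by rewrite aS // (vS p).2 se -E -se (uS e).2.
have F1 : forall e p, q e = q p -> exists2 w, T w & g_mul oS e (g_inv oS p) = i (g_r oG (q p)) w.
  move=> e p E.
  have c1 : composable oS e (g_inv oS p) by rewrite /composable (iS p).1 !se E.
  have c3 : composable oS p (g_inv oS p) by rewrite /composable (iS p).1.
  have : (q @^-1` [set g_r oG (q p)]) (g_mul oS e (g_inv oS p)).
    by rewrite /= qmul // E -qmul // (vS p).1 (qrs p).1.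
  by rewrite H1 // => -[w Tw <-]; exists w.
have Ffib : forall e p, q e = q p -> exists2 w, T w & e = g_mul oS (i (g_r oG (q p)) w) p.
  move=> e p E; have [w Tw Ew] := F1 e p E; exists w => //.
  by rewrite -Ew -F0.
have Funiq : forall p w w', T w -> T w' ->
    g_mul oS (i (g_r oG (q p)) w) p = g_mul oS (i (g_r oG (q p)) w') p -> w = w'.
  move=> p w w' Tw Tw' E.
  have c : forall w, T w -> composable oS (i (g_r oG (q p)) w) p.
    by move=> w0 Tw0; rewrite /composable re (irs _ _ (uGr _) Tw0).2.
  have := gp_cancel_r HgS (c _ Tw) (c _ Tw') E.
  by move/iinj => /(_ (uGr _) (uGr _) Tw Tw') [].
have KP : forall a b, composable oG a b ->
    g_mul oS (P a) (P b) = g_mul oS (i (g_r oG a) (sigma a b)) (P (g_mul oG a b)).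
  move=> a b cab.
  have cS : composable oS (P a) (P b) by apply: compS; rewrite !qP.
  rewrite {1}(F0 (g_mul oS (P a) (P b)) (P (g_mul oG a b))); last by rewrite qmul // !qP.
  by rewrite (Hsig a b cab).2.
have Pinv : forall g, g_inv oS (P g) =
    g_mul oS (i (g_s oG g) (sigma g (g_inv oG g))^-1) (P (g_inv oG g)).
  move=> g; set c := sigma g (g_inv oG g).
  have cg : composable oG g (g_inv oG g) by rewrite /composable (iG g).1.
  have [Tc _] := Hsig _ _ cg.
  have Tc' := TV _ Tc.
  have cX : composable oS (i (g_s oG g) c^-1) (P (g_inv oG g)).
    by apply: compS; rewrite qi // qP (iG g).1 (gp_ss HgG).
  apply: (gp_cancel_l HgS (a := P g)).
  - by rewrite /composable (iS _).1.
  - by rewrite /composable (mS _ _ cX).1 (irs _ _ (uGs g) Tc').1 se qP.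
  have c1 : composable oS (P g) (i (g_s oG g) c^-1) by apply: compS; rewrite qP qi // (gp_rs HgG).
  have c2 : composable oS (i (g_r oG g) c^-1) (P g) by apply: compS; rewrite qP qi // (gp_sr HgG).
  have c3 : composable oS (P g) (P (g_inv oG g)) by apply: compS; rewrite !qP.
  rewrite (vS _).1 -aS //.
  have h3 := H3 (P g) _ Tc'; rewrite (qrs _).1 (qrs _).2 qP in h3.
  rewrite -h3 aS // KP // (vG g).1 (qPu _ (uGr g)) imul // mulr1 imul // mulVr ?Tu //.
  by rewrite re qP.
have Coc : forall x g, composable oG x g ->
    sigma x g * sigma (g_mul oG x g) (g_inv oG g) = sigma g (g_inv oG g).
  move=> x g cxg.
  have cg : composable oG g (g_inv oG g) by rewrite /composable (iG g).1.
  have cxgi : composable oG (g_mul oG x g) (g_inv oG g).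
    by rewrite /composable (mG _ _ cxg).2 (iG g).1.
  have [Ta _] := Hsig _ _ cxg.
  have [Tb _] := Hsig _ _ cxgi.
  have [Tc _] := Hsig _ _ cg.
  have Ex : g_mul oG (g_mul oG x g) (g_inv oG g) = x.
    by rewrite aG // (vG g).1 -cxg (uG x).2.
  apply: (Funiq (P x)); rewrite ?qP; [exact: TM | exact: Tc |].
  have c1 : composable oS (P x) (P g) by apply: compS; rewrite !qP.
  have c2 : composable oS (P g) (P (g_inv oG g)) by apply: compS; rewrite !qP.
  have E1 : g_mul oS (g_mul oS (P x) (P g)) (P (g_inv oG g)) =
            g_mul oS (i (g_r oG x) (sigma x g * sigma (g_mul oG x g) (g_inv oG g))) (P x).
    have c3 : composable oS (i (g_r oG x) (sigma x g)) (P (g_mul oG x g)).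
      by apply: compS; rewrite qi // qP (gp_sr HgG) (mG _ _ cxg).1.
    have c4 : composable oS (P (g_mul oG x g)) (P (g_inv oG g)) by apply: compS; rewrite !qP.
    rewrite KP // aS // KP // Ex (mG _ _ cxg).1 -imul //.
    have c5 : composable oS (i (g_r oG x) (sigma x g)) (i (g_r oG x) (sigma (g_mul oG x g) (g_inv oG g))).
      by apply: compS; rewrite !qi // (gp_sr HgG) (gp_rr HgG).
    have c6 : composable oS (i (g_r oG x) (sigma (g_mul oG x g) (g_inv oG g))) (P x).
      by apply: compS; rewrite !qi // qP (gp_sr HgG).
    by rewrite aS.
  have E2 : g_mul oS (P x) (g_mul oS (P g) (P (g_inv oG g))) =
            g_mul oS (i (g_r oG x) (sigma g (g_inv oG g))) (P x).
    rewrite KP // (vG g).1 (qPu _ (uGr g)) imul // mulr1.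
    have h3 := H3 (P x) _ Tc; rewrite (qrs _).1 (qrs _).2 qP in h3.
    by rewrite -cxg -h3.
  by rewrite -E1 -E2 aS.
have zex : forall e, exists w, T w /\ e = g_mul oS (i (g_r oG (q e)) w) (P (q e)).
  move=> e; have [w Tw Ew] := Ffib e (P (q e)) (esym (qP _)).
  by exists w; split => //; rewrite qP in Ew.
pose z e := projT1 (cid (zex e)).
have zP : forall e, T (z e) /\ e = g_mul oS (i (g_r oG (q e)) (z e)) (P (q e)).
  by move=> e; exact: (projT2 (cid (zex e))).
have zU : forall e w, T w -> e = g_mul oS (i (g_r oG (q e)) w) (P (q e)) -> z e = w.
  move=> e w Tw Ew; have [Tz Ez] := zP e; apply: (Funiq (P (q e))) => //.
  by rewrite qP -Ez -Ew.
have zP1 : forall g, z (P g) = 1.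
  move=> g; apply: zU => //; rewrite !qP.
  by have := lunit (P g); rewrite qP => ->.
split.
- move=> f [lcf eqf cpf]; split.
  + move=> x; exact: (cP x _ (lcf (P x))).
  + apply: (subclosed_compact _ cpf); first exact: closed_closure.
    by apply: closureS => g /= Hg; exists (P g) => //; exact: qP.
- split.
  + move=> f1 f2 [_ e1 _] [_ e2 _] E; apply: funext => e.
    have [w Tw Ew] := Ffib e (P (q e)) (esym (qP _)).
    have Ee : e = T_act oS i q w (P (q e)) by rewrite Tact qP; rewrite qP in Ew.
    rewrite [in LHS]Ee [in RHS]Ee (e1 _ _ Tw) (e2 _ _ Tw).
    by congr (_ * _); have := congr1 (fun F => F (q e)) E.
  + move=> h [lch cph].
    exists (fun e => z e * h (q e)); last first.
      by apply: funext => g; rewrite /Psi /= zP1 mul1r qP.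
    split.
    * move=> e.
      have [B [Pa [HB Bqe cPa qPa [_ _ _ [zeta [zS zlc]]]]]] := Htriv (q e).
      case: HB => oB _ _ _ _.
      have key : forall e', B (q e') -> z e' = zeta e' * (zeta (P (q e')))^-1.
        move=> e' Be'; have [Tz1 E1] := zS e' Be'.
        have [Tz2 E2] : T (zeta (P (q e'))) /\ P (q e') = g_mul oS (i (g_r oG (q e')) (zeta (P (q e')))) (Pa (q e')).
          by have := zS (P (q e')); rewrite qP; apply.
        move: Tz2 E2; set u := zeta (P (q e')) => Tu2 E2.
        apply: zU; first by apply: TM => //; exact: TV.
        have c1 : composable oS (i (g_r oG (q e')) (zeta e' * u^-1)) (i (g_r oG (q e')) u).
          by apply: compS; rewrite !qi // ?(gp_sr HgG) ?(gp_rr HgG) //; apply: TM => //; exact: TV.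
        have c2 : composable oS (i (g_r oG (q e')) u) (Pa (q e')).
          by apply: compS; rewrite qi // qPa // (gp_sr HgG).
        rewrite E2 -aS // imul //; last by apply: TM => //; exact: TV.
        by rewrite -mulrA mulVr ?Tu // mulr1 -E1.
      have N1 : \forall e' \near e, B (q e').
        exact: (cq e B (open_nbhs_nbhs (conj oB Bqe))).
      have N2 : \forall e' \near e, zeta e' = zeta e.
        exact: zlc.
      have N3 : \forall e' \near e, zeta (P (q e')) = zeta (P (q e)).
        have B1 : B (q (P (q e))) by rewrite qP.
        exact: (cq e _ (cP (q e) _ (zlc _ B1))).
      have N4 : \forall e' \near e, h (q e') = h (q e).
        exact: (cq e _ (lch (q e))).
      near=> e'.
      have b1 : B (q e') by near: e'; exact: N1.
      have b2 : zeta e' = zeta e by near: e'; exact: N2.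
      have b3 : zeta (P (q e')) = zeta (P (q e)) by near: e'; exact: N3.
      have b4 : h (q e') = h (q e) by near: e'; exact: N4.
      by rewrite /= key // [in RHS]key // b2 b3 b4.
      Unshelve. all: end_near.
    * move=> w e Tw; rewrite Tact.
      have ce : composable oS (i (g_r oG (q e)) w) e.
        by rewrite /composable re (irs _ _ (uGr _) Tw).2.
      have qe' : q (g_mul oS (i (g_r oG (q e)) w) e) = q e by rewrite qmul // qi // (uG _).1.
      rewrite qe' mulrA; congr (_ * _); apply: zU; first by apply: TM => //; exact: (zP e).1.
      have [Tz Ez] := zP e.
      have c1 : composable oS (i (g_r oG (q e)) w) (i (g_r oG (q e)) (z e)).
        by apply: compS; rewrite !qi // (gp_sr HgG) (gp_rr HgG).
      have c2 : composable oS (i (g_r oG (q e)) (z e)) (P (q e)).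
        by apply: compS; rewrite qi // qP (gp_sr HgG).
      by rewrite qe' -imul // aS // -Ez.
    * have -> : q @` [set e | z e * h (q e) != 0] = [set g | h g != 0].
        apply/seteqP; split.
        - move=> g [e /= He <-]; apply: contraNN He => /eqP ->; by rewrite mulr0.
        - move=> g /= Hg; exists (P g); rewrite /= ?zP1 ?mul1r ?qP //.
      exact: cph.
- by move=> c f g _ _; split.
- move=> f g [_ ef _] [_ eg _]; apply: funext => x.
  rewrite /Psi /conv_twist /conv_cocycle /= qP.
  set h := fun gam => (g_mul oG x gam, g_inv oG gam).
  have -> : [set p : G * G | composable oG p.1 p.2 /\ g_mul oG p.1 p.2 = x] =
            h @` range_fiber oG (g_s oG x).
    apply/seteqP; split.
    - move=> [a b] /= [cab Eab]; exists (g_inv oG b).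
        by rewrite /range_fiber /= (iG b).1 -Eab (mG _ _ cab).2.
      have cb : composable oG b (g_inv oG b) by rewrite /composable (iG b).1.
      by rewrite /h gp_invinv // -Eab aG // (vG b).1 -cab (uG a).2.
    - move=> _ [gm Hg <-]; rewrite /h /=.
      have cxg : composable oG x gm by rewrite /composable Hg.
      have cg : composable oG gm (g_inv oG gm) by rewrite /composable (iG gm).1.
      split; first by rewrite /composable (mG _ _ cxg).2 (iG gm).1.
      by rewrite aG // (vG gm).1 -cxg (uG x).2.
  rewrite fsbig_image; last first.
    by move=> a b _ _ [_ E]; rewrite -(gp_invinv HgG a) E gp_invinv.
  apply: eq_fsbigr => gm /set_mem Hg.
  have cxg : composable oG x gm by rewrite /composable Hg.
  have cg : composable oG gm (g_inv oG gm) by rewrite /composable (iG gm).1.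
  have cxgi : composable oG (g_mul oG x gm) (g_inv oG gm).
    by rewrite /composable (mG _ _ cxg).2 (iG gm).1.
  have [Ta _] := Hsig _ _ cxg.
  have [Tb _] := Hsig _ _ cxgi.
  have [Tc _] := Hsig _ _ cg.
  have -> : g_mul oS (P x) (P gm) = T_act oS i q (sigma x gm) (P (g_mul oG x gm)).
    by rewrite Tact qP KP // (mG _ _ cxg).1.
  have -> : g_inv oS (P gm) = T_act oS i q (sigma gm (g_inv oG gm))^-1 (P (g_inv oG gm)).
    by rewrite Tact qP Pinv (iG gm).1.
  rewrite ef // eg; last exact: TV.
  rewrite /h /omega /= -(Coc _ _ cxg) invrM ?Tu //.
  set a := sigma x gm; set b := sigma (g_mul oG x gm) (g_inv oG gm).
  set F := f _; set G' := g _.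
  have ha : a * a^-1 = 1 by rewrite mulrV ?Tu.
  transitivity ((a * a^-1) * (b^-1 * F * G')); last by rewrite ha mul1r.
  ring.
- move=> bar [_ barM _ _ barT] f [_ ef _]; apply: funext => x.
  rewrite /Psi /star_twist /star_cocycle /omega /=.
  have cg : composable oG x (g_inv oG x) by rewrite /composable (iG x).1.
  have [Tc _] := Hsig _ _ cg.
  have -> : g_inv oS (P x) = T_act oS i q (sigma x (g_inv oG x))^-1 (P (g_inv oG x)).
    by rewrite Tact qP Pinv (iG x).1.
  by rewrite ef; [rewrite barM barT //; exact: TV | exact: TV].
Qed.
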